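(* Let $n \geq 2$, $N = \frac{n(n+1)}{2}$, fix $1 \leq i < j \leq k < n$, and put $x = \lambda_{k,i}$, $y = \lambda_{k,j}$. Let $\mathcal{A}$, $V_{\mathcal{A}}$ and its $U(\mathfrak{gl}(n,\mathbb{C}))$-module structure be as in the context. Let $\mathcal{B} \subset \mathcal{A}$ be the subalgebra of functions in $\mathcal{A}$ that are also regular at every $1$-critical point (see context). Let $\tau$ be the involution of $\mathbb{Z}^N$ swapping the coordinates $(k,i)$ and $(k,j)$, and for $z \in \mathbb{Z}^N_0$ define $$S(z) = \frac{T(z) + T(\tau(z))}{2}, \qquad A(z) = \frac{T(z) - T(\tau(z))}{2(x-y)} \qquad \text{in } V_{\mathcal{A}}.$$ Let $V_{\mathcal{B}} \subset V_{\mathcal{A}}$ be the $\mathcal{B}$-submodule generated by $\{S(z), A(z) \mid z \in \mathbb{Z}^N_0\}$. Then $V_{\mathcal{B}}$ is a $U(\mathfrak{gl}(n,\mathbb{C}))$-submodule of $V_{\mathcal{A}}$.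
   Context: Points $v \in \mathbb{C}^N$ are arrays $(v_{r,s})_{1 \leq s \leq r \leq n}$ and $\lambda_{r,s}$ is the coordinate function $v \mapsto v_{r,s}$. A point $v$ is generic if for all $1 \leq a < b \leq r < n$ one has $v_{r,a} - v_{r,b} \notin \mathbb{Z}$. A point $v$ is called $1$-critical (for the fixed pair) if $v_{k,i} = v_{k,j}$ and for every other pair $(r,a) \neq (r,b)$ of positions in the same row $r < n$ with $\{(r,a),(r,b)\} \neq \{(k,i),(k,j)\}$ one has $v_{r,a} - v_{r,b} \notin \mathbb{Z}$. $\mathcal{A}$ is the ring of rational functions $g/h$ ($g,h$ polynomials in the $\lambda_{r,s}$) with $h(v) \neq 0$ at every generic $v$; $\mathcal{B}$ consists of those $f \in \mathcal{A}$ which can be written with a denominator nonvanishing also at every $1$-critical point (e.g. $1/(x-y) \in \mathcal{A} \setminus \mathcal{B}$). $\mathbb{Z}^N_0$ is the set of $z \in \mathbb{Z}^N$ with $z_{n,s} = 0$ for all $s$; $\delta^{r,s} \in \mathbb{Z}^N$ is the unit vector at position $(r,s)$. For a rational function $f$ and $z \in \mathbb{Z}^N$, $f(\lambda^z)$ denotes $v \mapsto f(v+z)$. Put $p^{\pm}_{r,s} = \prod_{t=1}^{r \pm 1} (\lambda_{r,s} - \lambda_{r \pm 1, t})$, $q_{r,s} = \prod_{t \neq s,\, 1 \leq t \leq r} (\lambda_{r,s} - \lambda_{r,t})$, $|\lambda|_r = \lambda_{r,1} + \cdots + \lambda_{r,r}$, $|\lambda|_0 = 0$. $V_{\mathcal{A}}$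 is the free $\mathcal{A}$-module with basis $\{T(z) \mid z \in \mathbb{Z}^N_0\}$, equipped with the $U(\mathfrak{gl}(n,\mathbb{C}))$-module structure by $\mathcal{A}$-linear operators given on basis vectors by $E_{r,r+1} T(z) = -\sum_{s=1}^r \frac{p^+_{r,s}(\lambda^z)}{q_{r,s}(\lambda^z)} T(z + \delta^{r,s})$, $E_{r+1,r} T(z) = \sum_{s=1}^r \frac{p^-_{r,s}(\lambda^z)}{q_{r,s}(\lambda^z)} T(z - \delta^{r,s})$ for $1 \leq r < n$, and $E_{r,r} T(z) = (|\lambda^z|_r - |\lambda^z|_{r-1} + r - 1) T(z)$ for $1 \leq r \leq n$ (these formulas do define a $U(\mathfrak{gl}(n,\mathbb{C}))$-module). The element $A(z)$ is a vector of $V_{\mathcal{A}}$, not to be confused with the algebra $\mathcal{A}$. *)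

(* Defs.v *)
From HB Require Import structures.
From mathcomp Require Import all_boot all_order all_algebra.
From mathcomp Require Import complex.
From mathcomp Require Import Rstruct.
From mathcomp Require Import fraction mpoly.

Set Implicit Arguments.
Unset Strict Implicit.
Unset Printing Implicit Defensive.

Import Order.TTheory GRing.Theory Num.Theory.
Local Open Scope ring_scope.

Definition CC : numClosedFieldType := complex Rdefinitions.R.

(* Positions (r,s), 1 <= s <= r <= n, encoded 0-based: (r-1, s-1) with s-1 <= r-1 < n. *)
Definition pos (n : nat) := {p : 'I_n * 'I_n | (nat_of_ord p.2 <= nat_of_ord p.1)%N}.

(* N = #|pos n| = n(n+1)/2 ; variables lambda_{r,s} are 'X_(enum_rank p). *)
Definition Nv (n : nat) := #|{: pos n}|.

Definition Pol (n : nat) := {mpoly CC[Nv n]}.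
Definition Frac (n : nat) := {fraction Pol n}.
Definition toF n (p : Pol n) : Frac n := @FracField.tofrac (Pol n) p.

Definition mkpos (n r s : nat) : option (pos n) :=
  match @insub nat (fun m => (m < n)%N) 'I_n r, @insub nat (fun m => (m < n)%N) 'I_n s with
  | Some r', Some s' => @insub ('I_n * 'I_n) (fun p => (nat_of_ord p.2 <= nat_of_ord p.1)%N) (pos n) (r', s')
  | _, _ => None
  end.

Definition point (n : nat) := pos n -> CC.
Definition Zvec (n : nat) := {ffun pos n -> int}.

(* coordinate v_{r,s} (0-based r, s); 0 outside the range, never used there *)
Definition vat n (v : point n) (r s : nat) : CC :=
  if mkpos n r s is Some p then v p else 0.
Definition zat n (z : Zvec n) (r s : nat) : int :=
  if mkpos n r s is Some p then z p else 0.

Definition evalP n (h : Pol n) (v : point n) : CC :=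
  h.@[fun i => v (enum_val i)].

Definition is_int (c : CC) : Prop := exists m : int, c = m%:~R.

(* generic: for 1 <= a < b <= r < n (paper), v_{r,a} - v_{r,b} not in Z *)
Definition generic n (v : point n) : Prop :=
  forall r a b : nat, (r.+1 < n)%N -> (a < b)%N -> (b <= r)%N ->
    ~ is_int (vat v r a - vat v r b).

Definition critical1 n (k i j : nat) (v : point n) : Prop :=
  vat v k i = vat v k j /\
  forall r a b : nat, (r.+1 < n)%N -> (a < b)%N -> (b <= r)%N ->
    ~ (r = k /\ a = i /\ b = j) ->
    ~ is_int (vat v r a - vat v r b).

Definition inA n (f : Frac n) : Prop :=
  exists g h : Pol n, (forall v, generic v -> evalP h v != 0) /\ f = toF g / toF h.
Definition inB n (k i j : nat) (f : Frac n) : Prop :=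
  inA f /\
  exists g h : Pol n,
    (forall v, generic v \/ critical1 k i j v -> evalP h v != 0) /\ f = toF g / toF h.

Definition lam n (r s : nat) : Frac n :=
  if mkpos n r s is Some p then toF ('X_(enum_rank p) : Pol n) else 0.
Definition lamz n (z : Zvec n) (r s : nat) : Frac n := lam n r s + (zat z r s)%:~R.

Definition pplus n (z : Zvec n) (r s : nat) : Frac n :=
  \prod_(t < r.+2) (lamz z r s - lamz z r.+1 t).
Definition pminus n (z : Zvec n) (r s : nat) : Frac n :=
  \prod_(t < r) (lamz z r s - lamz z r.-1 t).
Definition qq n (z : Zvec n) (r s : nat) : Frac n :=
  \prod_(t < r.+1 | val t != s) (lamz z r s - lamz z r t).
(* |lambda^z|_r for paper index r (row r-1 0-based); |lambda|_0 = 0 *)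
Definition rowsum n (z : Zvec n) (r : nat) : Frac n :=
  \sum_(t < r) lamz z r.-1 t.

Definition shift n (z : Zvec n) (r s : nat) (c : int) : Zvec n :=
  [ffun p : pos n => z p + (if ((val (sval p).1 == r) && (val (sval p).2 == s)) then c else 0)].

(* vectors of V_A: sum_z w(z) T(z), represented by the coefficient function w *)
Definition vec n := Zvec n -> Frac n.

Definition T n (z : Zvec n) : vec n := fun z' => if z' == z then 1 else 0.

(* The operators, as coefficient-wise formulas (0-based r; paper index r+1):
   E_{r+1,r+2} w = - sum_z sum_s w(z) p^+/q (lambda^z) T(z + delta^{r,s})
   E_{r+2,r+1} w =   sum_z sum_s w(z) p^-/q (lambda^z) T(z - delta^{r,s})
   E_{r+1,r+1} w =   sum_z w(z) (|lambda^z|_{r+1} - |lambda^z|_r + r) T(z) *)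
Definition Eup n (r : nat) (w : vec n) : vec n := fun z' =>
  - \sum_(s < r.+1)
      (pplus (shift z' r s (-1)) r s / qq (shift z' r s (-1)) r s) * w (shift z' r s (-1)).
Definition Edown n (r : nat) (w : vec n) : vec n := fun z' =>
  \sum_(s < r.+1)
      (pminus (shift z' r s 1) r s / qq (shift z' r s 1) r s) * w (shift z' r s 1).
Definition Ediag n (r : nat) (w : vec n) : vec n := fun z' =>
  (rowsum z' r.+1 - rowsum z' r + r%:R) * w z'.

Definition inZ0 n (z : Zvec n) : Prop := forall s : nat, (s < n)%N -> zat z n.-1 s = 0.

Definition tau n (k i j : nat) (z : Zvec n) : Zvec n :=
  [ffun p : pos n =>
     if (val (sval p).1 == k) && (val (sval p).2 == i) then zat z k j
     else if (val (sval p).1 == k) && (val (sval p).2 == j) then zat z k i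
     else z p].

Definition Svec n (k i j : nat) (z : Zvec n) : vec n := fun z' =>
  (T z z' + T (tau k i j z) z') / 2%:R.
Definition Avec n (k i j : nat) (z : Zvec n) : vec n := fun z' =>
  (T z z' - T (tau k i j z) z') / (2%:R * (lam n k i - lam n k j)).

Definition inVB n (k i j : nat) (w : vec n) : Prop :=
  exists (m : nat) (zs : 'I_m -> Zvec n) (b b' : 'I_m -> Frac n),
    (forall l, inZ0 (zs l) /\ inB k i j (b l) /\ inB k i j (b' l)) /\
    forall z', w z' = \sum_(l < m) (b l * Svec k i j (zs l) z' + b' l * Avec k i j (zs l) z').

(* Main.v *)
Require Import Defs.
From HB Require Import structures.
From mathcomp Require Import all_boot all_order all_algebra.
From mathcomp Require Import complex Rstruct fraction mpoly.
From mathcomp Require Import ring zify.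
Set Implicit Arguments.
Unset Strict Implicit.
Unset Printing Implicit Defensive.
Import Order.TTheory GRing.Theory Num.Theory.
Local Open Scope ring_scope.


Section Basic.
Variable n : nat.

Lemma mkpos_coord r s (p : pos n) : mkpos n r s = Some p ->
  val (sval p).1 = r /\ val (sval p).2 = s.
Proof.
rewrite /mkpos; case: insubP => [r' _ Er|//]; case: insubP => [s' _ Es|//].
by case: insubP => [q _ Eq [<-]|//]; rewrite Eq /= Er Es.
Qed.

Lemma mkpos_some r s : (s <= r)%N -> (r < n)%N ->
  exists p, mkpos n r s = Some p.
Proof.
move=> hsr hrn; have hsn : (s < n)%N by apply: leq_ltn_trans hrn.
rewrite /mkpos; case: insubP => [r' _ Er|]; last by rewrite hrn.
case: insubP => [s' _ Es|]; last by rewrite hsn.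
case: insubP => [q _ Eq|]; first by exists q.
by rewrite /= Er Es hsr.
Qed.

Lemma mkpos_none r s : ~~ ((s <= r)%N && (r < n)%N) -> mkpos n r s = None.
Proof.
move=> h; case E: (mkpos n r s) => [p|] //.
have [h1 h2] := mkpos_coord E.
move: h; rewrite -h1 -h2 (valP p) ltn_ord //.
Qed.

Lemma mkpos_pos (p : pos n) : mkpos n (val (sval p).1) (val (sval p).2) = Some p.
Proof.
have [q Eq] := mkpos_some (valP p) (ltn_ord _).
have [h1 h2] := mkpos_coord Eq; rewrite Eq; congr Some.
apply: val_inj; move: h1 h2; rewrite /=.
case: (val q) => a b; case: (val p) => c d /= h1 h2.
by congr pair; apply: val_inj.
Qed.

Lemma zat_pos (z : Zvec n) (p : pos n) : zat z (val (sval p).1) (val (sval p).2) = z p.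
Proof. by rewrite /zat mkpos_pos. Qed.

Lemma zvec_eq (z1 z2 : Zvec n) :
  (forall r s, (s <= r)%N -> (r < n)%N -> zat z1 r s = zat z2 r s) -> z1 = z2.
Proof.
move=> h; apply/ffunP => p; rewrite -!zat_pos; apply: h; [exact: (valP p)|exact: ltn_ord].
Qed.

Lemma zat_shift (z : Zvec n) r s c r' s' : (s <= r)%N -> (r < n)%N ->
  zat (shift z r s c) r' s' = zat z r' s' + (if (r' == r) && (s' == s) then c else 0).
Proof.
move=> hsr hrn; rewrite /zat; case E: (mkpos n r' s') => [p|].
  by have [h1 h2] := mkpos_coord E; rewrite /shift ffunE h1 h2.
case: (r' =P r) => [er|]; case: (s' =P s) => [es|] //=; rewrite ?addr0 //.
by subst; have [p Ep] := mkpos_some hsr hrn; rewrite Ep in E.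
Qed.

Lemma shiftK (z : Zvec n) r s c : shift (shift z r s c) r s (- c) = z.
Proof.
apply/ffunP => p; rewrite /shift !ffunE; case: ifP => _; last by rewrite !addr0.
by rewrite addrK.
Qed.

Lemma shift_eqE (z z' : Zvec n) r s c : (shift z' r s c == z) = (z' == shift z r s (- c)).
Proof.
apply/eqP/eqP => [<-|->]; first by rewrite shiftK.
by rewrite -{2}(opprK c) shiftK.
Qed.

End Basic.


Section Tau.
Variables (n k i j : nat).
Hypotheses (hij : (i < j)%N) (hjk : (j <= k)%N) (hkn : (k.+1 < n)%N).

Local Notation tau := (tau k i j).

Lemma zat_tau (z : Zvec n) r s : zat (tau z) r s =
  if (r == k) && (s == i) then zat z k j else if (r == k) && (s == j) then zat z k i
  else zat z r s.
Proof.
rewrite {1}/zat; case E: (mkpos n r s) => [p|].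
  have [h1 h2] := mkpos_coord E; rewrite /tau ffunE h1 h2.
  by case: ifP => //; case: ifP => // _ _; rewrite -zat_pos h1 h2.
have hin : (i < n)%N by lia.
case: (r =P k) => [er|]; case: (s =P i) => [es|] //=.
- by subst; have [p Ep] := mkpos_some (ltnW (leq_trans hij hjk)) (ltnW hkn); rewrite Ep in E.
- case: (s =P j) => [es'|_]; first by subst; have [p Ep] := mkpos_some hjk (ltnW hkn); rewrite Ep in E.
  by rewrite /zat E.
- by rewrite /zat E.
- by rewrite /zat E.
Qed.

Lemma tau_inv (z : Zvec n) : tau (tau z) = z.
Proof.
apply: zvec_eq => r s _ _; rewrite !zat_tau.
have ij : (i != j) by rewrite neq_ltn hij.
case: (r =P k) => [->|] /=; last by [].
rewrite eqxx /=.
case: (s =P i) => [->|] /=; first by rewrite eq_sym (negbTE ij) eqxx.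
case: (s =P j) => [->|] //=; by rewrite eqxx.
Qed.

Lemma tau_fix (z : Zvec n) : zat z k i = zat z k j -> tau z = z.
Proof.
move=> e; apply: zvec_eq => r s _ _; rewrite zat_tau.
case: (r =P k) => [->|] /=; last by [].
case: (s =P i) => [->|] /=; first by rewrite e.
by case: (s =P j) => [->|].
Qed.

Definition sig r s := if r == k then (if s == i then j else if s == j then i else s) else s.

Lemma sig_le r s : (s <= r)%N -> (sig r s <= r)%N.
Proof.
rewrite /sig; case: (r =P k) => [->|//] h.
case: ifP => _; first by []. case: ifP => _ //. lia.
Qed.

Lemma sig_inv r s : sig r (sig r s) = s.
Proof.
rewrite /sig; case: (r =P k) => // _.
have ij : (i != j) by rewrite neq_ltn hij.
case: (s =P i) => [->|]; first by rewrite eq_sym (negbTE ij) eqxx.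
by case: (s =P j) => [->|]; [rewrite eqxx | move=> /eqP/negbTE -> /eqP/negbTE ->].
Qed.

Lemma tau_shift (z : Zvec n) r s c : (s <= r)%N -> (r < n)%N ->
  tau (shift z r s c) = shift (tau z) r (sig r s) c.
Proof.
move=> hsr hrn; apply: zvec_eq => r' s' _ _.
rewrite zat_tau !zat_shift ?sig_le // zat_tau /sig.
case: (r =P k) => ? /=; case: (s =P i) => ? /=; case: (s =P j) => ? /=;
repeat (case: eqP => ? /=); subst; rewrite ?addr0 //; try lia.
Qed.

End Tau.


Section Eval.
Variable n : nat.

Lemma evalPM (p q : Pol n) v : evalP (p * q) v = evalP p v * evalP q v.
Proof. exact: mevalM. Qed.
Lemma evalP1 v : evalP (1 : Pol n) v = 1.
Proof. exact: meval1. Qed.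
Lemma evalPD (p q : Pol n) v : evalP (p + q) v = evalP p v + evalP q v.
Proof. exact: mevalD. Qed.
Lemma evalPB (p q : Pol n) v : evalP (p - q) v = evalP p v - evalP q v.
Proof. exact: mevalB. Qed.
Lemma evalP0 v : evalP (0 : Pol n) v = 0.
Proof. exact: meval0. Qed.
Lemma evalPint (m : int) v : evalP (m%:~R : Pol n) v = m%:~R.
Proof. by rewrite /evalP rmorph_int. Qed.
Lemma evalPX (p : pos n) v : evalP ('X_(enum_rank p) : Pol n) v = v p.
Proof. by rewrite /evalP mevalXU enum_rankK. Qed.

Definition lampol (z : Zvec n) r s : Pol n :=
  (if mkpos n r s is Some p then 'X_(enum_rank p) else 0) + (zat z r s)%:~R.

Lemma toF_lampol z r s : toF (lampol z r s) = lamz z r s.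
Proof.
rewrite /lampol /lamz /lam /toF rmorphD rmorph_int; congr (_ + _).
by case: (mkpos n r s) => [p|] //; rewrite rmorph0.
Qed.

Lemma evalP_lampol z r s v : evalP (lampol z r s) v = vat v r s + (zat z r s)%:~R.
Proof.
rewrite /lampol evalPD evalPint /vat; congr (_ + _).
by case: (mkpos n r s) => [p|]; rewrite ?evalPX ?evalP0.
Qed.

Definition v0 : point n := fun p => (val (sval p).2)%:R * 'i.

Lemma vat_v0 r s : (s <= r)%N -> (r < n)%N -> vat v0 r s = s%:R * 'i.
Proof.
move=> h1 h2; have [p Ep] := mkpos_some h1 h2.
by rewrite /vat Ep /v0; have [_ ->] := mkpos_coord Ep.
Qed.

Lemma v0_generic : generic v0.
Proof.
move=> r a b hr hab hbr [m].
rewrite !vat_v0 //; try lia.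
rewrite -mulrBl => /(congr1 (fun x => x ^+ 2)).
rewrite exprMn sqrCi mulrN1 => e.
have : ((m ^+ 2 + (a%:Z - b%:Z) ^+ 2)%:~R : CC) = 0.
  by rewrite rmorphD /= !rmorphXn /= -e rmorphB /= -!pmulrn addNr.
move/eqP; rewrite intr_eq0 => /eqP h.
have : (a%:Z - b%:Z) ^+ 2 = 0 by nia.
by move/eqP; rewrite expf_eq0 /= subr_eq0 => /eqP [] e2; move: hab; rewrite e2 ltnn.
Qed.

End Eval.


Section Good.
Variables (n k i j : nat).
Hypotheses (hij : (i < j)%N) (hjk : (j <= k)%N) (hkn : (k.+1 < n)%N).

Definition good (h : Pol n) := forall v, generic v \/ critical1 k i j v -> evalP h v != 0.
Definition ggood (h : Pol n) := forall v : point n, generic v -> evalP h v != 0.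

Lemma good_ggood h : good h -> ggood h.
Proof. by move=> g v gv; apply: g; left. Qed.

Lemma ggood_neq0 h : ggood h -> h != 0.
Proof. by move=> g; apply/eqP => e; move: (g _ (@v0_generic n)); rewrite e evalP0 eqxx. Qed.

Lemma ggood_toF h : ggood h -> toF h != 0.
Proof. by move=> g; rewrite /toF tofrac_eq0; apply: ggood_neq0. Qed.

Lemma good1 : good 1.
Proof. by move=> v _; rewrite evalP1 oner_eq0. Qed.

Lemma goodM h1 h2 : good h1 -> good h2 -> good (h1 * h2).
Proof. by move=> g1 g2 v hv; rewrite evalPM mulf_neq0 //; [apply: g1|apply: g2]. Qed.

Lemma ggoodM h1 h2 : ggood h1 -> ggood h2 -> ggood (h1 * h2).
Proof. by move=> g1 g2 v hv; rewrite evalPM mulf_neq0 //; [apply: g1|apply: g2]. Qed.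

Lemma good_int (m : int) : m != 0 -> good m%:~R.
Proof. by move=> hm v _; rewrite evalPint intr_eq0. Qed.

Lemma good_prod (I : Type) (r : seq I) (P : pred I) (F : I -> Pol n) :
  (forall x, P x -> good (F x)) -> good (\prod_(x <- r | P x) F x).
Proof. by move=> h; apply: big_ind => //; [exact: good1|exact: goodM]. Qed.

Definition bad r s t := (r = k) /\ ((s = i /\ t = j) \/ (s = j /\ t = i)).

Lemma lin_eval_int (z : Zvec n) r s t v :
  evalP (lampol z r s - lampol z r t) v = 0 ->
  vat v r s - vat v r t = (zat z r t - zat z r s)%:~R.
Proof.
rewrite evalPB !evalP_lampol => e.
rewrite rmorphB /=; apply/eqP; rewrite -subr_eq0 -e; apply/eqP; ring.
Qed.

Lemma is_int_opp c : is_int c -> is_int (- c).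
Proof. by case=> m ->; exists (- m); rewrite rmorphN. Qed.

Lemma ggood_lin (z : Zvec n) r s t : (r.+1 < n)%N -> (s <= r)%N -> (t <= r)%N -> s <> t ->
  ggood (lampol z r s - lampol z r t).
Proof.
move=> hr hs ht st v gv; apply/eqP => /lin_eval_int e.
case: (ltngtP s t) => [lt|lt|eq] //.
  by apply: (gv r s t) => //; exists (zat z r t - zat z r s).
apply: (gv r t s) => //; rewrite -opprB; apply: is_int_opp.
by exists (zat z r t - zat z r s).
Qed.

Lemma good_lin (z : Zvec n) r s t : (r.+1 < n)%N -> (s <= r)%N -> (t <= r)%N -> s <> t ->
  (~ bad r s t \/ zat z r s <> zat z r t) ->
  good (lampol z r s - lampol z r t).
Proof.
move=> hr hs ht st hb v [gv|[cv1 cv2]]; first exact: ggood_lin.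
apply/eqP => /lin_eval_int e.
have [hbad|hnb] := boolP [&& r == k & ((s == i) && (t == j)) || ((s == j) && (t == i))].
  case/andP: hbad => /eqP er /orP [/andP [/eqP es /eqP et]|/andP [/eqP es /eqP et]]; subst.
  - move: e; rewrite cv1 subrr => /eqP; rewrite eq_sym intr_eq0 subr_eq0 => /eqP e.
    by case: hb => [nb|ne]; [apply: nb; rewrite /bad; tauto | apply: ne; rewrite e].
  - move: e; rewrite cv1 subrr => /eqP; rewrite eq_sym intr_eq0 subr_eq0 => /eqP e.
    by case: hb => [nb|ne]; [apply: nb; rewrite /bad; tauto | apply: ne; rewrite e].
case: (ltngtP s t) => [lt|lt|eq] //.
  apply: (cv2 r s t) => //; last by exists (zat z r t - zat z r s).
  case=> er [es et]; move: hnb; subst; by rewrite !eqxx.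
apply: (cv2 r t s) => //; last first.
  by rewrite -opprB; apply: is_int_opp; exists (zat z r t - zat z r s).
case=> er [es et]; move: hnb; subst; by rewrite !eqxx orbT.
Qed.

Definition isB (f : Frac n) := exists g h, good h /\ toF h * f = toF g.

Lemma isB_inB f : isB f -> inB k i j f.
Proof.
case=> g [h [gh e]].
have hf : f = toF g / toF h.
  by rewrite -e mulrAC mulfV ?mul1r //; apply: ggood_toF; apply: good_ggood.
split; first by exists g, h; split => //; apply: good_ggood.
by exists g, h.
Qed.

Lemma isB_poly g : isB (toF g).
Proof. by exists g, 1; split; [exact: good1| rewrite /toF rmorph1 mul1r]. Qed.

Lemma isB_add f1 f2 : isB f1 -> isB f2 -> isB (f1 + f2).
Proof.
case=> g1 [h1 [gh1 e1]] [g2 [h2 [gh2 e2]]].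
exists (g1 * h2 + g2 * h1), (h1 * h2); split; first exact: goodM.
rewrite /toF !rmorphD !rmorphM /= -/(toF _) -!/(toF _) -e1 -e2; ring.
Qed.

Lemma isB_mul f1 f2 : isB f1 -> isB f2 -> isB (f1 * f2).
Proof.
case=> g1 [h1 [gh1 e1]] [g2 [h2 [gh2 e2]]].
exists (g1 * g2), (h1 * h2); split; first exact: goodM.
rewrite /toF !rmorphM /= -!/(toF _) -e1 -e2; ring.
Qed.

Lemma isB_int (m : int) : isB m%:~R.
Proof. by have := isB_poly m%:~R; rewrite /toF rmorph_int. Qed.

Lemma isB_opp f : isB f -> isB (- f).
Proof. by move=> h; rewrite -mulN1r; apply: isB_mul => //; have := isB_int (-1); rewrite rmorphN rmorph1. Qed.

Lemma isB_sub f1 f2 : isB f1 -> isB f2 -> isB (f1 - f2).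
Proof. by move=> h1 h2; apply: isB_add => //; apply: isB_opp. Qed.

Lemma isB_nat m : isB m%:R.
Proof. by have := isB_int m; rewrite -pmulrn. Qed.

Lemma isB_div f h : isB f -> good h -> isB (f / toF h).
Proof.
case=> g [h1 [gh1 e1]] gh.
exists g, (h1 * h); split; first exact: goodM.
have hn : toF h != 0 by apply: ggood_toF; apply: good_ggood.
by rewrite /toF rmorphM /= -!/(toF _) -e1 -mulrA [toF h * _]mulrC mulfVK.
Qed.

Lemma isB_prod (I : Type) (r : seq I) (P : pred I) (F : I -> Frac n) :
  (forall x, P x -> isB (F x)) -> isB (\prod_(x <- r | P x) F x).
Proof.
move=> h; apply: big_ind => //; last exact: isB_mul.
by have := isB_nat 1.
Qed.

Lemma isB_sum (I : Type) (r : seq I) (P : pred I) (F : I -> Frac n) :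
  (forall x, P x -> isB (F x)) -> isB (\sum_(x <- r | P x) F x).
Proof.
move=> h; apply: big_ind => //; last exact: isB_add.
by have := isB_nat 0.
Qed.

Lemma isB_lamz z r s : isB (lamz z r s).
Proof. by rewrite -toF_lampol; apply: isB_poly. Qed.

Lemma isB_lam r s : isB (lam n r s).
Proof.
rewrite /lam; case: (mkpos n r s) => [p|]; first exact: isB_poly.
by have := isB_nat 0.
Qed.

End Good.


Section Alg.
Variable F : fieldType.

Lemma frac_diff (P Q1 Q2 K : F) : Q1 != 0 -> Q2 != 0 -> Q2 - Q1 = K ->
  P / Q1 - P / Q2 = P * K / (Q1 * Q2).
Proof. move=> h1 h2 <-; field; by rewrite h1 h2. Qed.

Lemma dd_sum (FX FY GX GY DF DG e : F) : FX - FY = e * DF -> GX - GY = e * DG ->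
  e != 0 -> GX != 0 -> GY != 0 ->
  FX / (e * GX) - FY / (e * GY) = (DF * GY - FY * DG) / (GX * GY).
Proof.
move=> h1 h2 he hx hy.
have -> : FX = FY + e * DF by rewrite -h1 addrC subrK.
have -> : GX = GY + e * DG by rewrite -h2 addrC subrK.
have hx' : GY + e * DG != 0 by rewrite -h2 addrC subrK.
field; by rewrite he hy hx'.
Qed.

Lemma dd_diff (FX FY GX GY DF DG e d : F) : FX - FY = e * DF -> GX - GY = e * DG ->
  (e + d) * GX != 0 -> (d - e) * GY != 0 ->
  FX / ((e + d) * GX) - FY / ((d - e) * GY) =
  e * ((d * (DF * GY - FY * DG) - (FX * GY + FY * GX)) / (((e + d) * GX) * ((d - e) * GY))).
Proof.
move=> h1 h2 hx hy.
move: hx hy; rewrite !mulf_eq0 !negb_or => /andP [hed hx] /andP [hde hy].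
have -> : FX = FY + e * DF by rewrite -h1 addrC subrK.
have -> : GX = GY + e * DG by rewrite -h2 addrC subrK.
have hx' : GY + e * DG != 0 by rewrite -h2 addrC subrK.
field; by rewrite hed hde hy hx'.
Qed.


Lemma dd_sum0 (FX FY GX GY DF DG e d : F) : FX - FY = e * DF -> GX - GY = e * DG ->
  e != 0 -> GX != 0 -> GY != 0 -> d = 0 ->
  FX / ((e + d) * GX) + FY / ((d - e) * GY) = (DF * GY - FY * DG) / (GX * GY).
Proof.
move=> h1 h2 he hx hy ->; rewrite addr0 sub0r mulNr invrN mulrN.
exact: dd_sum.
Qed.

Lemma dd_e0 (FX FY GX GY e d : F) : e != 0 -> GX != 0 -> GY != 0 -> d = 0 ->
  (FX / ((e + d) * GX) - FY / ((d - e) * GY)) * e = FX / GX + FY / GY.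
Proof.
move=> he hx hy ->; rewrite addr0 sub0r; field; by rewrite oppr_eq0 he hx hy.
Qed.

Lemma frac_diff2 (P Q1 Q2 K : F) : Q1 != 0 -> Q2 != 0 -> Q2 - Q1 = K ->
  P / Q1 - P / Q2 = P * K / Q1 / Q2.
Proof. move=> h1 h2 <-; field; by rewrite h1 h2. Qed.


Lemma pair_S (a b e Tu Tt : F) : e != 0 -> 2%:R != 0 :> F ->
  2%:R^-1 * (a * Tu + b * Tt) =
  ((a + b) / 2%:R) * ((Tu + Tt) / 2%:R) + ((a - b) * e / 2%:R) * ((Tu - Tt) / (2%:R * e)).
Proof. move=> he h2; field; by rewrite he h2. Qed.

Lemma pair_A (a b e g Tu Tt : F) : e != 0 -> 2%:R != 0 :> F -> a - b = e * g ->
  (2%:R * e)^-1 * (a * Tu - b * Tt) =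
  (g / 2%:R) * ((Tu + Tt) / 2%:R) + ((a + b) / 2%:R) * ((Tu - Tt) / (2%:R * e)).
Proof.
move=> he h2 hg; have -> : a = b + e * g by rewrite -hg addrC subrK.
field; by rewrite he h2.
Qed.

End Alg.


Lemma big_split1 (R : Type) (idx : R) (op : Monoid.com_law idx) m (P : pred nat)
  (F : nat -> R) j0 : (j0 < m)%N -> P j0 ->
  \big[op/idx]_(t < m | P t) F t = op (F j0) (\big[op/idx]_(t < m | P t && (t != j0 :> nat)) F t).
Proof.
move=> hj hP; rewrite (bigD1 (Ordinal hj)) //=; congr (op _ _); try by apply: eq_bigl.
Qed.

Section Coef.
Variables (n k i j : nat).
Hypotheses (hij : (i < j)%N) (hjk : (j <= k)%N) (hkn : (k.+1 < n)%N).
Local Notation tau := (tau k i j).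
Local Notation isB := (@isB n k i j).
Local Notation good := (@good n k i j).

Definition pp (z : Zvec n) r r' m s : Frac n := \prod_(t < m) (lamz z r s - lamz z r' t).
Definition ee : Frac n := lam n k i - lam n k j.
Definition Req (z : Zvec n) (al be : Frac n) :=
  [/\ isB (al + be), isB ((al - be) * ee) &
      (zat z k i <> zat z k j -> exists2 g : Frac n, isB g & al - be = ee * g)].

Lemma lamz_tau (z : Zvec n) r s : lamz (tau z) r s =
  if (r == k) && (s == i) then lamz z k i - (zat z k i)%:~R + (zat z k j)%:~R
  else if (r == k) && (s == j) then lamz z k j - (zat z k j)%:~R + (zat z k i)%:~R
  else lamz z r s.
Proof.
rewrite {1}/lamz zat_tau //.
case: ifP => [/andP [/eqP -> /eqP ->]|_]; first by rewrite /lamz addrK.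
case: ifP => [/andP [/eqP -> /eqP ->]|_]; first by rewrite /lamz addrK.
by [].
Qed.

Lemma lamz_tau_o (z : Zvec n) r s : (r != k) || ((s != i) && (s != j)) -> lamz (tau z) r s = lamz z r s.
Proof.
move=> h; rewrite lamz_tau; case: (r =P k) h => [->|] //= h.
by case: (s =P i) h => //= _; case: (s =P j).
Qed.

Lemma lamz_tau_i (z : Zvec n) : lamz (tau z) k i = lamz z k i - (zat z k i)%:~R + (zat z k j)%:~R.
Proof. by rewrite lamz_tau !eqxx. Qed.

Lemma lamz_tau_j (z : Zvec n) : lamz (tau z) k j = lamz z k j - (zat z k j)%:~R + (zat z k i)%:~R.
Proof.
rewrite lamz_tau eqxx /=; have -> : (j == i) = false by apply/eqP; lia.
by rewrite eqxx.
Qed.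

Lemma lamz_k (z : Zvec n) s : lamz z k s = lam n k s + (zat z k s)%:~R.
Proof. by []. Qed.

Definition qqpol (z : Zvec n) r s : Pol n :=
  \prod_(t < r.+1 | val t != s) (lampol z r s - lampol z r t).

Lemma toF_qq (z : Zvec n) r s : toF (qqpol z r s) = qq z r s.
Proof.
rewrite /toF /qqpol rmorph_prod /qq; apply: eq_bigr => t _.
by rewrite rmorphB /= -!/(toF _) !toF_lampol.
Qed.

Lemma good_qq (z : Zvec n) r s : (r.+1 < n)%N -> (s <= r)%N ->
  (r != k) || ((s != i) && (s != j)) || (zat z k i != zat z k j) -> good (qqpol z r s).
Proof.
move=> hr hs hc; apply: good_prod => -[t ht'] /= ht; apply: good_lin => //.
- by move=> e; rewrite e eqxx in ht.
have [hb|hb] := boolP ((r == k) && (((s == i) && (t == j)) || ((s == j) && (t == i)))).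
  right; case/orP: hc => [/orP [/eqP nk|/andP [/eqP si /eqP sj]]|/eqP ne].
  - by case/andP: hb => /eqP.
  - by case/andP: hb => _ /orP [/andP [/eqP]|/andP [/eqP]].
  case/andP: hb => /eqP -> /orP [/andP [/eqP -> /eqP ->]|/andP [/eqP -> /eqP ->]] //.
  by move=> e; apply: ne.
left; case=> er [[es et]|[es et]]; move: hb; by rewrite er es et !eqxx ?orbT.
Qed.

Lemma cf_isB (z : Zvec n) r r' m s : (r.+1 < n)%N -> (s <= r)%N ->
  (r != k) || ((s != i) && (s != j)) || (zat z k i != zat z k j) ->
  isB (pp z r r' m s / qq z r s).
Proof.
move=> hr hs hc; rewrite -toF_qq; apply: isB_div; last exact: good_qq.
by apply: isB_prod => t _; apply: isB_sub; apply: isB_lamz.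
Qed.

Lemma ee_neq0 : ee != 0.
Proof.
have := ggood_toF (@ggood_lin n (0 : Zvec n) k i j hkn (ltnW (leq_trans hij hjk)) hjk _).
rewrite /toF rmorphB /= -!/(toF _) !toF_lampol /lamz /zat.
have [p ->] := @mkpos_some n k i (ltnW (leq_trans hij hjk)) (ltnW hkn).
have [q ->] := @mkpos_some n k j hjk (ltnW hkn).
rewrite !ffunE !addr0; apply; lia.
Qed.

Lemma Req_same (z : Zvec n) al : isB al -> Req z al al.
Proof.
move=> h; split.
- by apply: isB_add.
- by rewrite subrr mul0r; exact: (@isB_nat n k i j 0).
- by move=> _; exists 0; [exact: (@isB_nat n k i j 0) | rewrite subrr mulr0].
Qed.

End Coef.


Section Cases.
Variables (n k i j : nat).
Hypotheses (hij : (i < j)%N) (hjk : (j <= k)%N) (hkn : (k.+1 < n)%N).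
Local Notation tau := (tau k i j).
Local Notation isB := (@isB n k i j).
Local Notation good := (@good n k i j).
Local Notation Req := (@Req n k i j).
Local Notation ee := (ee n k i j).
Let ltau_o := lamz_tau_o hij hjk hkn.
Let ltau_i := lamz_tau_i hij hjk hkn.
Let ltau_j := lamz_tau_j hij hjk hkn.
Let zat_tau := zat_tau hij hjk hkn.
Let ee0 : ee != 0 := ee_neq0 hij hjk hkn.

Lemma isB0 : isB 0. Proof. exact: (@isB_nat n k i j 0). Qed.

Lemma isB_ee : isB ee.
Proof. by apply: isB_sub; apply: isB_lam. Qed.

Lemma Req_of (z : Zvec n) al be : isB al -> isB be ->
  (exists2 g, isB g & al - be = ee * g) -> Req z al be.
Proof.
move=> ha hb [g hg e]; split => //; first exact: isB_add.
by rewrite e; apply: isB_mul; [apply: isB_mul => //; apply: isB_ee | apply: isB_ee].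
by move=> _; exists g.
Qed.

Lemma Req_swap (z : Zvec n) al be : Req (tau z) be al -> Req z al be.
Proof.
case=> h1 h2 h3; split; first by rewrite addrC.
  by rewrite -opprB mulNr; apply: isB_opp.
move=> hz; have [g hg e] : exists2 g, isB g & be - al = ee * g.
  have ji : (j == i) = false by apply/eqP; lia.
  apply: h3; rewrite !zat_tau ?eqxx /= ?ji ?eqxx /=; by move/esym.
by exists (- g); [apply: isB_opp|rewrite -opprB e mulrN].
Qed.

Lemma pp_tau (z : Zvec n) r r' m s : (r != k) || ((s != i) && (s != j)) -> r' != k ->
  pp (tau z) r r' m s = pp z r r' m s.
Proof. by move=> h1 h2; apply: eq_bigr => t _; rewrite !ltau_o // h2. Qed.

Lemma qq_tau (z : Zvec n) r s : r != k -> qq (tau z) r s = qq z r s.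
Proof. by move=> h; apply: eq_bigr => t _; rewrite !ltau_o // h. Qed.

Lemma Req_a (z : Zvec n) r r' m s : (r.+1 < n)%N -> (s <= r)%N -> r != k -> r' != k ->
  Req z (pp z r r' m s / qq z r s) (pp (tau z) r r' m s / qq (tau z) r s).
Proof.
move=> hr hs nk nk'; rewrite pp_tau ?nk // qq_tau //; apply: Req_same.
by apply: cf_isB => //; rewrite nk.
Qed.

Lemma Req_b (z : Zvec n) r s : (r.+1 < n)%N -> (s <= r)%N -> r != k ->
  Req z (pp z r k k.+1 s / qq z r s) (pp (tau z) r k k.+1 s / qq (tau z) r s).
Proof.
move=> hr hs nk.
have hi : (i < k.+1)%N by lia.
have hj : (j < k.+1)%N by lia.
have hji : j != i by apply/eqP; lia.
pose R (z' : Zvec n) := \prod_(t < k.+1 | true && (t != i :> nat) && (t != j :> nat))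
   (lamz z' r s - lamz z' k t).
have sp : forall z' : Zvec n, pp z' r k k.+1 s =
    (lamz z' r s - lamz z' k i) * ((lamz z' r s - lamz z' k j) * R z').
  move=> z'; rewrite /pp (@big_split1 _ _ _ k.+1 (fun _ => true)
     (fun t => lamz z' r s - lamz z' k t) i) //.
  by rewrite (@big_split1 _ _ _ k.+1 (fun t => true && (t != i))
     (fun t => lamz z' r s - lamz z' k t) j).
have RR : R (tau z) = R z.
  apply: eq_bigr => t /andP [/andP [_ ti] tj]; rewrite !ltau_o //.
    by rewrite ti tj orbT.
  by rewrite nk.
apply: Req_of; try by apply: cf_isB => //; rewrite nk.
rewrite qq_tau // -mulrBl !sp RR ltau_i ltau_j (ltau_o z (r:=r) (s:=s)); last by rewrite nk.
exists (- ((zat z k i)%:~R - (zat z k j)%:~R) * R z / qq z r s).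
  rewrite -toF_qq; apply: isB_div; last by apply: good_qq => //; rewrite nk.
  apply: isB_mul; [apply: isB_opp; apply: isB_sub; apply: isB_int|].
  by apply: isB_prod => t _; apply: isB_sub; apply: isB_lamz.
rewrite [RHS]mulrA; congr (_ * _); rewrite /ee !lamz_k; ring.
Qed.


Lemma divdiff (I : Type) (r : seq I) (P : pred I) (h : I -> Frac n) X Y :
  isB X -> isB Y -> (forall t, isB (h t)) ->
  exists2 D, isB D & \prod_(t <- r | P t) (X - h t) - \prod_(t <- r | P t) (Y - h t) = (X - Y) * D.
Proof.
move=> hX hY hh; elim: r => [|t r [D hD e]].
  by exists 0; [exact: isB0 | rewrite !big_nil subrr mulr0].
rewrite !big_cons; case: (P t); last by exists D.
exists ((X - h t) * D + \prod_(t <- r | P t) (Y - h t)).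
  apply: isB_add; first by apply: isB_mul => //; apply: isB_sub.
  by apply: isB_prod => x _; apply: isB_sub.
set PX := \prod_(t <- r | P t) (X - h t) in e *.
set PY := \prod_(t <- r | P t) (Y - h t) in e *.
have -> : PX = PY + (X - Y) * D by rewrite -e addrC subrK.
ring.
Qed.

Lemma Req_c (z : Zvec n) r' m s : (s <= k)%N -> s != i -> s != j -> r' != k ->
  Req z (pp z k r' m s / qq z k s) (pp (tau z) k r' m s / qq (tau z) k s).
Proof.
move=> hs si sj nk.
have hi : (i < k.+1)%N by lia.
have hj : (j < k.+1)%N by lia.
have nsi : (k != k) || ((s != i) && (s != j)) by rewrite si sj orbT.
pose H (z' : Zvec n) := \prod_(t < k.+1 | (t != s :> nat) && (t != i :> nat) && (t != j :> nat))
   (lamz z' k s - lamz z' k t).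
have sp : forall z' : Zvec n, qq z' k s =
    (lamz z' k s - lamz z' k i) * ((lamz z' k s - lamz z' k j) * H z').
  move=> z'; rewrite /qq (@big_split1 _ _ _ k.+1 (fun t => t != s)
     (fun t => lamz z' k s - lamz z' k t) i) 1?eq_sym //.
  rewrite (@big_split1 _ _ _ k.+1 (fun t => (t != s) && (t != i))
     (fun t => lamz z' k s - lamz z' k t) j) //.
  by rewrite eq_sym sj /=; apply/eqP; lia.
have HH : H (tau z) = H z.
  apply: eq_bigr => t /andP [/andP [_ ti] tj]; rewrite !ltau_o //.
  by rewrite ti tj orbT.
have ws : lamz (tau z) k s = lamz z k s by rewrite ltau_o.
have q1 : qq z k s != 0.
  by rewrite -toF_qq; apply: ggood_toF; apply: (@good_ggood n k i j); apply: good_qq => //; rewrite si sj orbT.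
have q2 : qq (tau z) k s != 0.
  by rewrite -toF_qq; apply: ggood_toF; apply: (@good_ggood n k i j); apply: good_qq => //; rewrite si sj orbT.
apply: Req_of; try by apply: cf_isB => //; rewrite si sj orbT.
rewrite pp_tau //.
set P := pp z k r' m s.
exists (P * (((zat z k i)%:~R - (zat z k j)%:~R) * H z) / qq z k s / qq (tau z) k s).
  rewrite -!toF_qq; apply: isB_div; last by apply: good_qq => //; rewrite si sj orbT.
  apply: isB_div; last by apply: good_qq => //; rewrite si sj orbT.
  apply: isB_mul; first by apply: isB_prod => t _; apply: isB_sub; apply: isB_lamz.
  apply: isB_mul; first by apply: isB_sub; apply: isB_int.
  by apply: isB_prod => t _; apply: isB_sub; apply: isB_lamz.
rewrite (frac_diff2 _ q1 q2 erefl).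
have -> : qq (tau z) k s - qq z k s = ee * (((zat z k i)%:~R - (zat z k j)%:~R) * H z).
  by rewrite !sp HH ws ltau_i ltau_j /ee !lamz_k; ring.
ring.
Qed.


Lemma Req_d (z : Zvec n) r' m : r' != k ->
  Req z (pp z k r' m i / qq z k i) (pp (tau z) k r' m j / qq (tau z) k j).
Proof.
move=> nk.
have hi : (i < k.+1)%N by lia.
have hj : (j < k.+1)%N by lia.
have hji : (j != i) by apply/eqP; lia.
have ji : (j == i) = false by apply/eqP; lia.
pose Yv := lamz (tau z) k j.
pose GX := \prod_(t < k.+1 | (t != i :> nat) && (t != j :> nat)) (lamz z k i - lamz z k t).
pose GY := \prod_(t < k.+1 | (t != i :> nat) && (t != j :> nat)) (Yv - lamz (tau z) k t).
pose d : Frac n := (zat z k i)%:~R - (zat z k j)%:~R.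
have qz : qq z k i = (ee + d) * GX.
  rewrite /qq (@big_split1 _ _ _ k.+1 (fun t => t != i)
     (fun t => lamz z k i - lamz z k t) j) //.
  by congr (_ * _); rewrite /ee /d !lamz_k; ring.
have qt : qq (tau z) k j = (d - ee) * GY.
  rewrite /qq (@big_split1 _ _ _ k.+1 (fun t => t != j)
     (fun t => lamz (tau z) k j - lamz (tau z) k t) i) 1?eq_sym //.
  congr (_ * _); first by rewrite /Yv ltau_i ltau_j /ee /d !lamz_k; ring.
  by apply: eq_bigl => t; rewrite andbC.
have GYe : GY = \prod_(t < k.+1 | (t != i :> nat) && (t != j :> nat)) (Yv - lamz z k t).
  by apply: eq_bigr => t /andP [ti tj]; rewrite ltau_o // ti tj orbT.
have FYe : pp (tau z) k r' m j = \prod_(t < m) (Yv - lamz z r' t).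
  by apply: eq_bigr => t _; rewrite (ltau_o z (r := r')) // nk.
have hYv : isB Yv by apply: isB_lamz.
have [DF hDF eF] := @divdiff _ (index_enum 'I_m) (fun _ => true) (fun t : 'I_m => lamz z r' t)
  (lamz z k i) Yv (@isB_lamz n k i j z k i) hYv (fun t => @isB_lamz n k i j z r' t).
have [DG hDG eG] := @divdiff _ (index_enum 'I_k.+1)
  (fun t : 'I_k.+1 => (t != i :> nat) && (t != j :> nat)) (fun t : 'I_k.+1 => lamz z k t)
  (lamz z k i) Yv (@isB_lamz n k i j z k i) hYv (fun t => @isB_lamz n k i j z k t).
have eY : lamz z k i - Yv = ee by rewrite /Yv ltau_j /ee !lamz_k; ring.
rewrite eY -FYe in eF; rewrite eY -GYe in eG.
have gX : good (\prod_(t < k.+1 | (t != i :> nat) && (t != j :> nat)) (lampol z k i - lampol z k t)).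
  apply: good_prod => -[t ht] /andP [/= ti tj]; apply: good_lin => //; try lia; try (by move=> e; rewrite e eqxx in ti).
  by left; case=> _ [[_ e]|[e _]]; [rewrite e eqxx in tj| move: hji; rewrite e eqxx].
have gY : good (\prod_(t < k.+1 | (t != i :> nat) && (t != j :> nat))
   (lampol (tau z) k j - lampol (tau z) k t)).
  apply: good_prod => -[t ht] /andP [/= ti tj]; apply: good_lin => //; try lia; try (by move=> e; rewrite e eqxx in tj).
  by left; case=> _ [[e _]|[_ e]]; [move: hji; rewrite e eqxx| rewrite e eqxx in ti].
have GXe : GX = toF (\prod_(t < k.+1 | (t != i :> nat) && (t != j :> nat)) (lampol z k i - lampol z k t)).
  by rewrite /toF rmorph_prod; apply: eq_bigr => t _; rewrite rmorphB /= -!/(toF _) !toF_lampol.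
have GYe' : GY = toF (\prod_(t < k.+1 | (t != i :> nat) && (t != j :> nat))
   (lampol (tau z) k j - lampol (tau z) k t)).
  by rewrite /toF rmorph_prod; apply: eq_bigr => t _; rewrite rmorphB /= -!/(toF _) !toF_lampol.
have gx0 : GX != 0 by rewrite GXe; apply: ggood_toF; apply: (@good_ggood n k i j).
have gy0 : GY != 0 by rewrite GYe'; apply: ggood_toF; apply: (@good_ggood n k i j).
have isBpp : forall (z' : Zvec n) r0 r1 m0 s0, isB (pp z' r0 r1 m0 s0).
  by move=> *; apply: isB_prod => t _; apply: isB_sub; apply: isB_lamz.
have hGX : isB GX by apply: isB_prod => t _; apply: isB_sub; apply: isB_lamz.
have hGY : isB GY by apply: isB_prod => t _; apply: isB_sub; apply: isB_lamz.
have divX : forall f, isB f -> isB (f / GX) by move=> f hf; rewrite GXe; apply: isB_div.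
have divY : forall f, isB f -> isB (f / GY) by move=> f hf; rewrite GYe'; apply: isB_div.
case: (zat z k i =P zat z k j) => [hab|hab].
  have d0 : d = 0 by rewrite /d hab subrr.
  split.
  - rewrite qz qt (dd_sum0 eF eG ee0 gx0 gy0 d0) invfM mulrA.
    apply: divY; apply: divX.
    by apply: isB_sub; apply: isB_mul.
  - rewrite qz qt (dd_e0 _ _ ee0 gx0 gy0 d0).
    by apply: isB_add; [apply: divX|apply: divY].
  - by [].
have q1 : (ee + d) * GX != 0.
  rewrite -qz -toF_qq; apply: ggood_toF; apply: (@good_ggood n k i j).
  by apply: good_qq => //; apply/orP; right; apply/eqP.
have q2 : (d - ee) * GY != 0.
  rewrite -qt -toF_qq; apply: ggood_toF; apply: (@good_ggood n k i j).
  apply: good_qq => //; apply/orP; right; rewrite !zat_tau ?eqxx /= ?ji ?eqxx /=.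
  by apply/eqP => /esym.
apply: Req_of.
- by apply: cf_isB => //; apply/orP; right; apply/eqP.
- apply: cf_isB => //; apply/orP; right; rewrite !zat_tau ?eqxx /= ?ji ?eqxx /=.
  by apply/eqP => /esym.
set FX := pp z k r' m i.
set FY := pp (tau z) k r' m j.
exists ((d * (DF * GY - FY * DG) - (FX * GY + FY * GX)) / ((ee + d) * GX * ((d - ee) * GY))).
  rewrite invfM mulrA -qz -qt -!toF_qq; apply: isB_div.
    apply: isB_div.
      apply: isB_sub; [apply: isB_mul; [by apply: isB_sub; apply: isB_int|]|].
        by apply: isB_sub; apply: isB_mul => //; apply: isBpp.
      by apply: isB_add; apply: isB_mul => //; apply: isBpp.
    by apply: good_qq => //; apply/orP; right; apply/eqP.
  apply: good_qq => //; apply/orP; right; rewrite !zat_tau ?eqxx /= ?ji ?eqxx /=.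
  by apply/eqP => /esym.
by rewrite qz qt (dd_diff eF eG q1 q2).
Qed.

Lemma Req_d' (z : Zvec n) r' m : r' != k ->
  Req z (pp z k r' m j / qq z k j) (pp (tau z) k r' m i / qq (tau z) k i).
Proof.
move=> nk; apply: Req_swap; have := @Req_d (tau z) r' m nk.
by rewrite tau_inv.
Qed.


Lemma Req_all (z : Zvec n) r r' m s : (r.+1 < n)%N -> (s <= r)%N ->
  (r = k -> r' != k) -> (r != k -> r' = k -> m = k.+1) ->
  Req z (pp z r r' m s / qq z r s) (pp (tau z) r r' m (sig k i j r s) / qq (tau z) r (sig k i j r s)).
Proof.
move=> hr hs h1 h2; rewrite /sig.
case: (r =P k) => [er|/eqP nk].
  subst r; have nk := h1 erefl.
  case: (s =P i) => [->|si]; first exact: Req_d.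
  case: (s =P j) => [->|sj]; first exact: Req_d'.
  by apply: Req_c => //; apply/eqP.
case: (r' =P k) => [er'|/eqP nk'].
  by subst r'; rewrite (h2 nk erefl); apply: Req_b.
exact: Req_a.
Qed.

End Cases.


Section Vec.
Variables (n k i j : nat).
Hypotheses (hij : (i < j)%N) (hjk : (j <= k)%N) (hkn : (k.+1 < n)%N).
Local Notation tau := (tau k i j).
Local Notation isB := (@isB n k i j).
Local Notation Req := (@Req n k i j).
Local Notation ee := (ee n k i j).
Let sig_le' := sig_le hij hjk hkn.
Let sig_inv' := sig_inv k hij.

Lemma inB_isB f : inB k i j f -> isB f.
Proof.
case=> _ [g [h [gh e]]]; exists g, h; split => //.
have hn : toF h != 0 by apply: ggood_toF; apply: (@good_ggood n k i j).
by rewrite e mulrC mulfVK.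
Qed.

Definition gen (g : Zvec n * Frac n * Frac n) : vec n :=
  fun z' => g.1.2 * Svec k i j g.1.1 z' + g.2 * Avec k i j g.1.1 z'.
Definition okg (g : Zvec n * Frac n * Frac n) := [/\ inZ0 g.1.1, isB g.1.2 & isB g.2].
Definition VBs (w : vec n) := exists l : seq (Zvec n * Frac n * Frac n),
  (forall g, g \in l -> okg g) /\ forall z', w z' = \sum_(g <- l) gen g z'.

Lemma VBs_ext (w1 w2 : vec n) : (forall z', w1 z' = w2 z') -> VBs w1 -> VBs w2.
Proof. by move=> e [l [h1 h2]]; exists l; split => // z'; rewrite -e. Qed.

Lemma VBs0 : VBs (fun _ => 0).
Proof. by exists [::]; split => // z'; rewrite big_nil. Qed.

Lemma VBs_add (w1 w2 : vec n) : VBs w1 -> VBs w2 -> VBs (fun z' => w1 z' + w2 z').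
Proof.
move=> [l1 [h1 e1]] [l2 [h2 e2]]; exists (l1 ++ l2); split.
  by move=> g; rewrite mem_cat => /orP [/h1|/h2].
by move=> z'; rewrite big_cat e1 e2.
Qed.

Lemma VBs_gen g : okg g -> VBs (gen g).
Proof.
by move=> h; exists [:: g]; split; [move=> g'; rewrite inE => /eqP -> | move=> z'; rewrite big_seq1].
Qed.

Lemma VBs_scale c (w : vec n) : isB c -> VBs w -> VBs (fun z' => c * w z').
Proof.
move=> hc [l [h1 e1]]; exists [seq (g.1.1, c * g.1.2, c * g.2) | g <- l]; split.
  move=> g /mapP [g' /h1 [h1' h2' h3'] ->]; split => //=; exact: isB_mul.
move=> z'; rewrite e1 big_map big_distrr; apply: eq_bigr => g _; rewrite /gen /=; ring.
Qed.

Lemma VBs_sum (I : eqType) (r : seq I) (F : I -> vec n) :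
  (forall x, x \in r -> VBs (F x)) -> VBs (fun z' => \sum_(x <- r) F x z').
Proof.
elim: r => [|x r IH] h.
  by apply: VBs_ext VBs0 => z'; rewrite big_nil.
apply: VBs_ext (VBs_add (h x (mem_head _ _)) (IH _)) => [z'|]; first by rewrite big_cons.
by move=> y hy; apply: h; rewrite inE hy orbT.
Qed.

Lemma VBs_inVB (w : vec n) : VBs w -> inVB k i j w.
Proof.
move=> [l [h1 e1]].
pose g0 : Zvec n * Frac n * Frac n := ([ffun=> 0], 0, 0).
exists (size l), (fun t => (nth g0 l t).1.1), (fun t => (nth g0 l t).1.2),
  (fun t => (nth g0 l t).2); split.
  move=> t; have /h1 [? ? ?] : nth g0 l t \in l by rewrite mem_nth.
  by split => //; split; apply: isB_inB.
by move=> z'; rewrite e1 (big_nth g0) big_mkord.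
Qed.

Lemma inVB_VBs (w : vec n) : inVB k i j w -> VBs w.
Proof.
move=> [m [zs [b [b' [h1 e1]]]]].
exists [seq (zs t, b t, b' t) | t <- enum 'I_m]; split.
  by move=> g /mapP [t _ ->]; have [h2 [h3 h4]] := h1 t; split => //; apply: inB_isB.
by move=> z'; rewrite e1 big_map big_enum.
Qed.


Definition Egen r (d : int) (P : Zvec n -> nat -> Frac n) (w : vec n) : vec n := fun z' =>
  \sum_(s < r.+1) (P (shift z' r s d) s / qq (shift z' r s d) r s) * w (shift z' r s d).

Lemma Egen_ext r d P (w1 w2 : vec n) z' : (forall z, w1 z = w2 z) ->
  Egen r d P w1 z' = Egen r d P w2 z'.
Proof. by move=> e; apply: eq_bigr => s _; rewrite e. Qed.

Lemma Egen_lin r d P a b (w1 w2 : vec n) z' :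
  Egen r d P (fun z => a * w1 z + b * w2 z) z' = a * Egen r d P w1 z' + b * Egen r d P w2 z'.
Proof. by rewrite /Egen !big_distrr -big_split; apply: eq_bigr => s _ /=; ring. Qed.

Lemma Egen_sum r d P (I : Type) (l : seq I) (F : I -> vec n) z' :
  Egen r d P (fun z => \sum_(x <- l) F x z) z' = \sum_(x <- l) Egen r d P (F x) z'.
Proof.
rewrite /Egen; under eq_bigr => s _ do rewrite big_distrr.
by rewrite exchange_big.
Qed.

Lemma Egen0 r d P z' : Egen r d P (fun _ => 0) z' = 0.
Proof. by apply: big1 => s _; rewrite mulr0. Qed.

Lemma shiftK' (z : Zvec n) r s c : shift (shift z r s (- c)) r s c = z.
Proof. by have := shiftK z r s (- c); rewrite opprK. Qed.

Lemma Egen_T r d P (z z' : Zvec n) : Egen r d P (T z) z' =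
  \sum_(s < r.+1) (P z s / qq z r s) * T (shift z r s (- d)) z'.
Proof.
apply: eq_bigr => s _; rewrite /T shift_eqE.
by case: eqP => [->|_]; rewrite ?shiftK' // !mulr0.
Qed.

Lemma sig_ord r (s : 'I_r.+1) : (sig k i j r s < r.+1)%N.
Proof. by rewrite ltnS; apply: sig_le'; rewrite -ltnS ltn_ord. Qed.

Lemma Egen_pair r d P (z z' : Zvec n) a b : (r < n)%N ->
  Egen r d P (fun z'' => a * T z z'' + b * T (tau z) z'') z' =
  \sum_(s < r.+1) (a * (P z s / qq z r s * T (shift z r s (- d)) z') +
     b * (P (tau z) (sig k i j r s) / qq (tau z) r (sig k i j r s) *
          T (tau (shift z r s (- d))) z')).
Proof.
move=> hr.
have sinj : injective (fun s : 'I_r.+1 => inord (sig k i j r s) : 'I_r.+1).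
  apply: (can_inj (g := fun s : 'I_r.+1 => inord (sig k i j r s))) => s; apply: val_inj.
  by rewrite /= !inordK ?sig_inv' ?sig_ord // -[X in (X < _)%N](inordK (sig_ord s)) sig_ord.
rewrite Egen_lin !Egen_T [X in _ + b * X](reindex_inj sinj) /= !big_distrr -big_split /=.
apply: eq_bigr => s _; rewrite inordK ?sig_ord // (tau_shift hij hjk hkn) // -ltnS ltn_ord //.
Qed.

Lemma two_neq0 : (2%:R : Frac n) != 0.
Proof.
have -> : (2%:R : Frac n) = toF 2%:R by rewrite /toF rmorph_nat.
apply: ggood_toF => v _; rewrite /evalP rmorph_nat pnatr_eq0 //.
Qed.

Lemma isB_half f : isB f -> isB (f / 2%:R).
Proof.
have -> : (2%:R : Frac n) = toF 2%:R by rewrite /toF rmorph_nat.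
move=> hf; apply: isB_div => // v _; rewrite /evalP rmorph_nat pnatr_eq0 //.
Qed.

Lemma inZ0_shift (z : Zvec n) r s c : (r.+1 < n)%N -> (s <= r)%N -> inZ0 z -> inZ0 (shift z r s c).
Proof.
move=> hr hs hz s' hs'; rewrite zat_shift //; last by lia.
by rewrite hz // add0r; case: eqP => // e; lia.
Qed.

Lemma ee_neq0' : ee != 0. Proof. exact: ee_neq0. Qed.

Lemma VBs_ES r d P (z : Zvec n) : (r.+1 < n)%N -> inZ0 z ->
  (forall s, (s <= r)%N -> Req z (P z s / qq z r s)
      (P (tau z) (sig k i j r s) / qq (tau z) r (sig k i j r s))) ->
  VBs (Egen r d P (Svec k i j z)).
Proof.
move=> hr hz hreq.
apply: (VBs_ext (w1 := fun z' => \sum_(s < r.+1) (2%:R^-1 * (P z s / qq z r s * T (shift z r s (- d)) z') +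
     2%:R^-1 * (P (tau z) (sig k i j r s) / qq (tau z) r (sig k i j r s) *
          T (tau (shift z r s (- d))) z')))).
  move=> z'; rewrite -Egen_pair; last by lia.
  by apply: Egen_ext => z''; rewrite /Svec -mulrDr mulrC.
apply: VBs_sum => s _.
have hs : (s <= r)%N by rewrite -ltnS ltn_ord //.
have [h1 h2 _] := hreq s hs.
set al := P z s / qq z r s.
set be := P (tau z) (sig k i j r s) / qq (tau z) r (sig k i j r s).
apply: (VBs_ext (w1 := gen (shift z r s (- d), (al + be) / 2%:R, (al - be) * ee / 2%:R))).
  move=> z'; rewrite -mulrDr (@pair_S _ _ _ _ _ _ ee_neq0' two_neq0); rewrite /gen /Svec /Avec /=.
  by [].
apply: VBs_gen; split => /=; [exact: inZ0_shift | exact: isB_half | exact: isB_half].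
Qed.

Lemma VBs_EA r d P (z : Zvec n) : (r.+1 < n)%N -> inZ0 z ->
  (forall s, (s <= r)%N -> Req z (P z s / qq z r s)
      (P (tau z) (sig k i j r s) / qq (tau z) r (sig k i j r s))) ->
  VBs (Egen r d P (Avec k i j z)).
Proof.
move=> hr hz hreq.
case: (zat z k i =P zat z k j) => [hab|hab].
  apply: (VBs_ext (w1 := fun _ => 0)) VBs0 => z'; rewrite -(Egen0 r d P z').
  by apply: Egen_ext => z''; rewrite /Avec (tau_fix hij hjk hkn hab) subrr mul0r.
pose c := (2%:R * ee)^-1.
apply: (VBs_ext (w1 := fun z' => \sum_(s < r.+1) (c * (P z s / qq z r s * T (shift z r s (- d)) z') +
     (- c) * (P (tau z) (sig k i j r s) / qq (tau z) r (sig k i j r s) *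
          T (tau (shift z r s (- d))) z')))).
  move=> z'; rewrite -Egen_pair; last by lia.
  by apply: Egen_ext => z''; rewrite /Avec /c; ring.
apply: VBs_sum => s _.
have hs : (s <= r)%N by rewrite -ltnS ltn_ord //.
have [h1 h2 h3] := hreq s hs.
have [g hg eg] := h3 hab.
set al := P z s / qq z r s.
set be := P (tau z) (sig k i j r s) / qq (tau z) r (sig k i j r s).
apply: (VBs_ext (w1 := gen (shift z r s (- d), g / 2%:R, (al + be) / 2%:R))).
  move=> z'; rewrite mulNr -mulrBr /c (@pair_A _ _ _ _ _ _ _ ee_neq0' two_neq0 eg).
  by rewrite /gen /Svec /Avec /=.
apply: VBs_gen; split => /=; [exact: inZ0_shift | exact: isB_half | exact: isB_half].
Qed.

Lemma VBs_Egen r d P (w : vec n) : (r.+1 < n)%N ->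
  (forall (z : Zvec n) s, (s <= r)%N -> Req z (P z s / qq z r s)
      (P (tau z) (sig k i j r s) / qq (tau z) r (sig k i j r s))) ->
  VBs w -> VBs (Egen r d P w).
Proof.
move=> hr hreq [l [hl el]].
apply: (VBs_ext (w1 := fun z' => \sum_(g <- l) (g.1.2 * Egen r d P (Svec k i j g.1.1) z' +
    g.2 * Egen r d P (Avec k i j g.1.1) z'))).
  move=> z'; rewrite (Egen_ext r d P z' el) Egen_sum; apply: eq_bigr => g _.
  by rewrite -Egen_lin.
apply: VBs_sum => g /hl [hz hb hb'].
apply: VBs_add.
  apply: VBs_scale => //; apply: VBs_ES => // s hs; exact: hreq.
  apply: VBs_scale => //; apply: VBs_EA => // s hs; exact: hreq.
Qed.

End Vec.


Section Diag.
Variables (n k i j : nat).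
Hypotheses (hij : (i < j)%N) (hjk : (j <= k)%N) (hkn : (k.+1 < n)%N).
Local Notation tau := (tau k i j).
Local Notation isB := (@isB n k i j).
Local Notation VBs := (@VBs n k i j).
Let ltau_o := lamz_tau_o hij hjk hkn.
Let ltau_i := lamz_tau_i hij hjk hkn.
Let ltau_j := lamz_tau_j hij hjk hkn.

Lemma rowsum_tau (z : Zvec n) r' : rowsum (tau z) r' = rowsum z r'.
Proof.
rewrite /rowsum; case: (r'.-1 =P k) => [e|/eqP ne]; last first.
  by apply: eq_bigr => t _; rewrite ltau_o // ne.
have -> : r' = k.+1 by lia.
have hi : (i < k.+1)%N by lia.
have hj : (j < k.+1)%N by lia.
have hji : (j != i) by apply/eqP; lia.
rewrite /= !(@big_split1 _ 0 +%R k.+1 (fun _ => true) _ i) //.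
rewrite !(@big_split1 _ 0 +%R k.+1 (fun t => true && (t != i)) _ j) //.
have -> : \sum_(t < k.+1 | true && (t != i :> nat) && (t != j :> nat)) lamz (tau z) k t =
          \sum_(t < k.+1 | true && (t != i :> nat) && (t != j :> nat)) lamz z k t.
  by apply: eq_bigr => t /andP [/andP [_ ti] tj]; rewrite ltau_o // ti tj orbT.
rewrite ltau_i ltau_j.
have E : forall (a b A B S S' : Frac n), S = S' -> a - A + B + (b - B + A + S) = a + (b + S').
  by move=> a b A B S S' ->; ring.
by apply: E.
Qed.

Definition cd (z : Zvec n) r := rowsum z r.+1 - rowsum z r + r%:R.

Lemma isB_cd (z : Zvec n) r : isB (cd z r).
Proof.
apply: isB_add; last exact: isB_nat.
by apply: isB_sub; apply: isB_sum => t _; apply: isB_lamz.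
Qed.

Lemma cd_gen g (z' : Zvec n) r : cd z' r * gen k i j g z' = cd g.1.1 r * gen k i j g z'.
Proof.
rewrite /gen /Svec /Avec /T.
case: (z' =P g.1.1) => [->|n1] //.
case: (z' =P tau g.1.1) => [->|n2]; first by rewrite /cd !rowsum_tau.
by rewrite !(addr0, subrr, mul0r, mulr0).
Qed.

Lemma VBs_Ediag r (w : vec n) : VBs w -> VBs (Ediag r w).
Proof.
move=> [l [hl el]].
apply: (VBs_ext (w1 := fun z' => \sum_(g <- l) cd g.1.1 r * gen k i j g z')).
  move=> z'; rewrite /Ediag el big_distrr; apply: eq_bigr => g _.
  by rewrite -cd_gen.
apply: VBs_sum => g /hl hg; apply: VBs_scale; first exact: isB_cd.
exact: VBs_gen.
Qed.

End Diag.

Unset Implicit Arguments.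

Theorem mainTheorem3 (n : nat) (hn : (2 <= n)%N) (k i j : nat)
  (hij : (i < j)%N) (hjk : (j <= k)%N) (hkn : (k.+1 < n)%N) :
  forall w : vec n, inVB k i j w ->
    (forall r : nat, (r.+1 < n)%N -> inVB k i j (Eup r w) /\ inVB k i j (Edown r w)) /\
    (forall r : nat, (r < n)%N -> inVB k i j (Ediag r w)).
Proof.
move=> w hw; have hV := inVB_VBs hw.
have hm1 : @isB n k i j (-1) by apply: isB_opp; exact: (@isB_nat n k i j 1).
split; last by move=> r hr; apply: VBs_inVB; apply: VBs_Ediag.
move=> r hr; split; apply: VBs_inVB.
  apply: (VBs_ext (w1 := fun z' => -1 * Egen r (-1) (fun z s => pp z r r.+1 r.+2 s) w z')).
    by move=> z'; rewrite mulN1r.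
  apply: VBs_scale => //; apply: VBs_Egen => // z s hs.
  by apply: Req_all => //; lia.
apply: (VBs_ext (w1 := fun z' => Egen r 1 (fun z s => pp z r r.-1 r s) w z')) => //.
apply: VBs_Egen => // z s hs.
by apply: Req_all => //; lia.
Qed.
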